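(* The unique double bialgebra morphism from $\mathcal{T}op$ to $\mathcal{C}omp$ is given by the following: for any quasi-poset $T$, \[\phi(T)=\sum_{f\in L(T)} (f^{-1}(1),\ldots,f^{-1}(\max(f))).\]
   Context: $\mathcal{T}op[A]$ is the vector space generated by finite topologies on $A$, identified with quasi-posets $(A,\le_T)$ (open sets are upward-closed sets); $a\sim_T b$ means $a\le_T b$ and $b\le_T a$. It is a double twisted bialgebra: product disjoint union; $\Delta_{A,B}(T)=T_{\mid A}\otimes T_{\mid B}$ if $B$ is open in $T$, $0$ otherwise; $\delta_A(T)=\sum_{\sim\in\mathrm{CE}(T)}T/\sim\otimes T|\sim$ (sum over $T$-compatible equivalences: classes $T$-connected and $\sim_{T/\sim}=\sim$, where $T|\sim$ keeps the relations $x\le_T y$ with $x\sim y$ and $T/\sim$ is the transitive closure of $\le_T$ and $\sim$), whose counit is $\varepsilon'_{\mathcal{T}op}(T)=1$ if $\le_T$ is an equivalence and $0$ otherwise. The morphism $\phi$ is equivalently the unique twisted bialgebra morphism $\mathcal{T}op\to\mathcal{C}omp$ with $\varepsilon'\circ\phi=\varepsilon'_{\mathcal{T}op}$. $\mathcal{C}omp[A]$ has basis the set compositions $(A_1,\ldots,A_k)$ of $A$, with quasi-shuffle product $\uplus$, deconcatenation coproduct $\Delta$, a second coproduct $\delta$, and $\varepsilon'(A_1,\ldots,A_k)=\delta_{k,1}$. $L(T)$ is the set of surjections $f:A\to\{1,\ldots,\max(f)\}$ such that $a\le_T b$ implies $f(a)\le f(b)$, and $a\le_T b$ with $f(a)=f(b)$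 implies $a\sim_T b$. *)

(* Defs.v *)
From mathcomp Require Import all_boot all_order all_algebra.
From mathcomp Require Import perm.
Set Implicit Arguments. Unset Strict Implicit. Unset Printing Implicit Defensive.
Import GRing.Theory.
Local Open Scope ring_scope.

(* A finite topology (quasi-poset) on A is a relation T : {set X * X}      *)
(* contained in A x A, reflexive on A and transitive; (a,b) \in T means    *)
(* a <=_T b.                                                               *)
(* An element of Comp[A] is a coefficient function on set compositions    *)
(* (sequences of nonempty pairwise disjoint blocks covering A).            *)
(* Linear maps Top[A] -> Comp[A] are given by their values on the basis.   *)

Section TopComp.
Variables (X : finType) (K : fieldType).

Definition is_top (A : {set X}) (T : {set X * X}) : bool :=
  [&& T \subset setX A A,
      [forall a in A, (a, a) \in T] &
      [forall a, forall b, forall c,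
         ((a, b) \in T) && ((b, c) \in T) ==> ((a, c) \in T)]].

Definition restr (B : {set X}) (T : {set X * X}) : {set X * X} :=
  T :&: setX B B.

Definition open_in (B : {set X}) (T : {set X * X}) : bool :=
  [forall a, forall b, ((a, b) \in T) && (a \in B) ==> (b \in B)].

Definition is_equiv (T : {set X * X}) : bool :=
  [forall a, forall b, ((a, b) \in T) ==> ((b, a) \in T)].

Definition relabel (s : {perm X}) (T : {set X * X}) : {set X * X} :=
  [set (s p.1, s p.2) | p in T].

Definition is_comp (A : {set X}) (C : seq {set X}) : bool :=
  [&& set0 \notin C,
      pairwise (fun B1 B2 : {set X} => [disjoint B1 & B2]) C &
      \bigcup_(B <- C) B == A].

(* Functions A -> {1,...,max f} are encoded as f : X -> 'I_(#|X|.+1) with *)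
(* f x = 0 outside A (the values outside A are irrelevant).                *)
Definition sfun := {ffun X -> 'I_#|X|.+1}.

Definition fmax (A : {set X}) (f : sfun) : nat := \max_(a in A) (f a : nat).

Definition is_surj (A : {set X}) (f : sfun) : bool :=
  [&& [forall x, (x \notin A) ==> ((f x : nat) == 0%N)],
      [forall a in A, (1 <= f a)%N] &
      [forall i : 'I_#|X|.+1, (1 <= i <= fmax A f)%N ==>
                                [exists a in A, (f a : nat) == i]]].

Definition inL (A : {set X}) (T : {set X * X}) (f : sfun) : bool :=
  [&& is_surj A f,
      [forall a, forall b, ((a, b) \in T) ==> (f a <= f b)%N] &
      [forall a, forall b, ((a, b) \in T) && ((f a : nat) == f b)
                             ==> ((b, a) \in T)]].

Definition blocks (A : {set X}) (f : sfun) : seq {set X} :=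
  [seq [set a in A | (f a : nat) == i] | i <- iota 1 (fmax A f)].

Definition comps (A : {set X}) : seq (seq {set X}) :=
  undup [seq blocks A f | f <- enum [pred f : sfun | is_surj A f]].

Fixpoint qsh (s : seq {set X}) : seq {set X} -> seq (seq {set X}) :=
  match s with
  | [::] => fun t => [:: t]
  | a :: s' =>
      fix qsh_t (t : seq {set X}) : seq (seq {set X}) :=
        match t with
        | [::] => [:: s]
        | b :: t' =>
            [seq a :: u | u <- qsh s' t] ++
            [seq b :: u | u <- qsh_t t'] ++
            [seq (a :|: b) :: u | u <- qsh s' t']
        end
  end.

Definition cprod (A B : {set X}) (c1 c2 : seq {set X} -> K)
    : seq {set X} -> K :=
  fun C => \sum_(C1 <- comps A) \sum_(C2 <- comps B)
             c1 C1 * c2 C2 * (count_mem C (qsh C1 C2))%:R.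

(* epsilon' on Comp[A]: (A_1,...,A_k) |-> delta_{k,1} (and 1 on the empty *)
(* composition, the unit of Comp[emptyset])                               *)
Definition eps'_comp (A : {set X}) (c : seq {set X} -> K) : K :=
  \sum_(C <- comps A) c C * (size C <= 1)%N%:R.

Definition eps'_top (T : {set X * X}) : K := (is_equiv T)%:R.

Definition tb_morphism (psi : {set X} -> {set X * X} -> seq {set X} -> K)
    : Prop :=
  [/\ (* psi_A maps into Comp[A] *)
      (forall (A : {set X}) (T : {set X * X}) (C : seq {set X}), is_top A T -> ~~ is_comp A C -> psi A T C = 0),
      (forall (s : {perm X}) (A : {set X}) (T : {set X * X}) (C : seq {set X}), is_top A T ->
          psi (s @: A) (relabel s T) [seq s @: B | B : {set X} <- C] = psi A T C),
      (forall C : seq {set X}, psi set0 set0 C = (C == [::])%:R),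
      (forall (A B : {set X}) (T1 T2 : {set X * X}) (C : seq {set X}), [disjoint A & B] -> is_top A T1 -> is_top B T2 ->
          psi (A :|: B) (T1 :|: T2) C = cprod A B (psi A T1) (psi B T2) C) &
      (* coproduct: Delta_{A,B} o psi = (psi (x) psi) o Delta_{A,B} *)
      (forall (A B : {set X}) (T : {set X * X}) (C1 C2 : seq {set X}), [disjoint A & B] -> is_top (A :|: B) T ->
          is_comp A C1 -> is_comp B C2 ->
          psi (A :|: B) T (C1 ++ C2) =
            if open_in B T then psi A (restr A T) C1 * psi B (restr B T) C2
            else 0)].

Definition eps'_compat (psi : {set X} -> {set X * X} -> seq {set X} -> K)
    : Prop :=
  forall (A : {set X}) (T : {set X * X}), is_top A T -> eps'_comp A (psi A T) = eps'_top T.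

Definition Phi (A : {set X}) (T : {set X * X}) : seq {set X} -> K :=
  fun C => \sum_(f : sfun | inL A T f && (blocks A f == C)) 1.

End TopComp.

(* Main.v *)
Require Import Defs.
From mathcomp Require Import all_boot all_order all_algebra.
From mathcomp Require Import perm zify.
Set Implicit Arguments. Unset Strict Implicit. Unset Printing Implicit Defensive.
Import GRing.Theory.
Local Open Scope ring_scope.

Section Proofs.
Variables (X : finType) (K : fieldType).
Implicit Types (A B : {set X}) (T : {set X * X}) (C : seq {set X}) (f : sfun X).

Definition pos C (x : X) : nat := find (fun B : {set X} => x \in B) C.

Lemma bigcup_has (F : {set X} -> {set X}) C x :
  (x \in \bigcup_(B <- C) F B) = has (fun B => x \in F B) C.
Proof. elim: C => [|c C IH]; rewrite ?big_nil ?big_cons ?in_set0 // in_setU IH //=.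
Qed.

Lemma comp_cover A C : is_comp A C -> forall x, has (fun B => x \in B) C = (x \in A).
Proof. case/and3P=> _ _ /eqP <- x; by rewrite bigcup_has. Qed.

Lemma comp_pos_lt A C x : is_comp A C -> x \in A -> (pos C x < size C)%N.
Proof. move=> HC xA; by rewrite /pos -has_find (comp_cover HC). Qed.

Lemma comp_nth A C i x : is_comp A C -> (i < size C)%N -> x \in nth set0 C i -> pos C x = i.
Proof.
move=> HC iC xi.
have hx : has (fun B => x \in B) C by apply/(has_nthP set0); exists i.
have := nth_find set0 hx; rewrite -/(pos C x) => xp.
have pC : (pos C x < size C)%N by rewrite /pos -has_find.
case/and3P: HC => _ /(pairwiseP set0) Hpw _.
apply/eqP; apply: contraT => ne.
case: (ltngtP (pos C x) i) ne => // lt _.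
- have := Hpw _ _ pC iC lt. rewrite -setI_eq0 => /eqP/setP/(_ x).
  by rewrite inE xp xi in_set0.
- have := Hpw _ _ iC pC lt. rewrite -setI_eq0 => /eqP/setP/(_ x).
  by rewrite inE xp xi in_set0.
Qed.

Lemma surj_range A f a : is_surj A f -> a \in A -> (1 <= f a <= fmax A f)%N.
Proof.
case/and3P=> _ /forall_inP H _ aA; rewrite H //=.
exact: (@leq_bigmax_cond X (fun x => x \in A) (fun x => nat_of_ord (f x)) a aA).
Qed.

Lemma surj_out A f x : is_surj A f -> x \notin A -> (f x : nat) = 0%N.
Proof. by case/and3P=> /forallP /(_ x) /implyP H _ _ /H /eqP. Qed.

Lemma fmax_le A f : (fmax A f <= #|X|)%N.
Proof. apply/bigmax_leqP => a _; by rewrite -ltnS. Qed.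

Lemma surj_hit A f i : is_surj A f -> (1 <= i <= fmax A f)%N ->
  exists2 a, a \in A & (f a : nat) = i.
Proof.
case/and3P=> _ _ /forallP H hi.
have hiX : (i < #|X|.+1)%N by rewrite ltnS; case/andP: hi => _ h; exact: leq_trans h (fmax_le _ _).
have := H (Ordinal hiX); rewrite /= hi => /exists_inP [a aA /eqP e]; by exists a.
Qed.

Lemma size_blocks A f : size (blocks A f) = fmax A f.
Proof. by rewrite size_map size_iota. Qed.

Lemma nth_blocks A f i : (i < fmax A f)%N ->
  nth set0 (blocks A f) i = [set a in A | (f a : nat) == i.+1].
Proof. move=> hi; by rewrite /blocks (nth_map 0%N) ?size_iota // nth_iota // add1n. Qed.

Lemma blocks_comp A f : is_surj A f -> is_comp A (blocks A f).
Proof.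
move=> Hs; apply/and3P; split.
- apply/negP => /(nthP set0) [i]; rewrite size_blocks => hi; rewrite nth_blocks //.
  have [a aA fa] := surj_hit Hs (i:=i.+1) hi.
  move/setP/(_ a); by rewrite !inE aA fa eqxx.
- apply/(pairwiseP set0) => i j; rewrite !inE size_blocks => hi hj ij.
  rewrite !nth_blocks // -setI_eq0; apply/eqP/setP => x; rewrite !inE.
  case: (boolP (x \in A)) => //= _; apply/negP => /andP[/eqP -> /eqP []] e.
  by move: ij; rewrite e ltnn.
- apply/eqP/setP => x; rewrite bigcup_has has_map.
  case: (boolP (x \in A)) => xA.
  + apply/hasP; exists (f x : nat); last by rewrite /= inE xA eqxx.
    rewrite mem_iota add1n ltnS; exact: surj_range.
  + apply/hasP => [[i _]]; by rewrite /= inE (negbTE xA).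
Qed.

Lemma pos_blocks A f a : is_surj A f -> a \in A -> pos (blocks A f) a = (f a).-1.
Proof.
move=> Hs aA; have /andP[h1 h2] := surj_range Hs aA.
have hlt : ((f a).-1 < fmax A f)%N by rewrite prednK.
apply: (comp_nth (blocks_comp Hs)); rewrite ?size_blocks //.
by rewrite nth_blocks // inE aA /= prednK.
Qed.

Lemma blocks_inj A f g : is_surj A f -> is_surj A g -> blocks A f = blocks A g -> f = g.
Proof.
move=> Hf Hg E; apply/ffunP => x; apply/val_inj => /=.
case: (boolP (x \in A)) => xA; last by rewrite (surj_out Hf xA) (surj_out Hg xA).
have := pos_blocks Hf xA; rewrite E pos_blocks // => e.
have /andP[h1 _] := surj_range Hf xA; have /andP[h2 _] := surj_range Hg xA.
by rewrite -(prednK h1) -(prednK h2) e.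
Qed.

Lemma comp_cons A c C : is_comp A (c :: C) ->
  [/\ c != set0, [disjoint c & \bigcup_(B <- C) B],
      is_comp (\bigcup_(B <- C) B) C & A = c :|: \bigcup_(B <- C) B].
Proof.
case/and3P => H0 Hp /eqP HU.
rewrite in_cons negb_or in H0; case/andP: H0 => c0 C0.
rewrite pairwise_cons in Hp; case/andP: Hp => Hc HpC.
rewrite big_cons in HU.
split; first by rewrite eq_sym.
- rewrite -setI_eq0; apply/eqP/setP => x; rewrite inE bigcup_has in_set0.
  apply/andP => [[xc /hasP [b bC xb]]]; have := allP Hc b bC.
  rewrite -setI_eq0 => /eqP/setP/(_ x); by rewrite inE xc xb in_set0.
- by rewrite /is_comp C0 HpC eqxx.
- by rewrite HU.
Qed.

Lemma comp_size A C : is_comp A C -> (size C <= #|A|)%N.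
Proof.
elim: C A => [|c C IH] A H //=.
have [c0 dj HC ->] := comp_cons H.
rewrite cardsU (disjoint_setI0 dj) cards0 subn0 -add1n.
apply: leq_add; [by rewrite card_gt0 | exact: IH].
Qed.

Lemma comp_nth_in A C i x : is_comp A C -> (i < size C)%N -> x \in nth set0 C i -> x \in A.
Proof. move=> HC hi xi; rewrite -(comp_cover HC); apply/(has_nthP set0); by exists i. Qed.

Lemma nth_pos A C x : is_comp A C -> x \in A -> x \in nth set0 C (pos C x).
Proof.
move=> HC xA; have h : has (fun B => x \in B) C by rewrite (comp_cover HC).
exact: (nth_find set0 h).
Qed.

Lemma comp_nth_nonempty A C i : is_comp A C -> (i < size C)%N -> nth set0 C i != set0.
Proof.
case/and3P => H0 _ _ hi; apply: contraNneq H0 => <-; exact: mem_nth.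
Qed.

Definition fC A C : sfun X :=
  [ffun x => inord (if x \in A then (pos C x).+1 else 0%N)].

Lemma fC_val A C x : is_comp A C ->
  (fC A C x : nat) = if x \in A then (pos C x).+1 else 0%N.
Proof.
move=> HC; rewrite ffunE inordK //; case: ifP => xA //.
exact: leq_trans (comp_pos_lt HC xA) (leq_trans (comp_size HC) (max_card _)).
Qed.

Lemma fmax_fC A C : is_comp A C -> fmax A (fC A C) = size C.
Proof.
move=> HC; apply/eqP; rewrite eqn_leq; apply/andP; split.
- apply/bigmax_leqP => a aA; rewrite fC_val // aA; exact: comp_pos_lt HC aA.
- case E: (size C) => [|n] //.
  have hn : (n < size C)%N by rewrite E.
  case/set0Pn: (comp_nth_nonempty HC hn) => a an.
  have aA := comp_nth_in HC hn an.
  have := @leq_bigmax_cond X (fun x => x \in A) (fun x => nat_of_ord (fC A C x)) a aA.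
  by rewrite fC_val // aA (comp_nth HC hn an).
Qed.

Lemma fC_surj A C : is_comp A C -> is_surj A (fC A C).
Proof.
move=> HC; apply/and3P; split.
- apply/forallP => x; apply/implyP => xA; by rewrite fC_val // (negbTE xA).
- apply/forall_inP => a aA; by rewrite fC_val // aA.
- apply/forallP => i; apply/implyP; rewrite fmax_fC // => /andP[i1 i2].
  have hn : (i.-1 < size C)%N by rewrite prednK.
  case/set0Pn: (comp_nth_nonempty HC hn) => a an.
  have aA := comp_nth_in HC hn an.
  apply/exists_inP; exists a => //.
  by rewrite fC_val // aA (comp_nth HC hn an) prednK.
Qed.

Lemma blocks_fC A C : is_comp A C -> blocks A (fC A C) = C.
Proof.
move=> HC; apply: (@eq_from_nth _ set0); rewrite size_blocks fmax_fC // => i hi.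
rewrite nth_blocks ?fmax_fC //; apply/setP => x; rewrite inE fC_val //.
case: (boolP (x \in A)) => xA /=.
- rewrite eqSS; apply/eqP/idP => [<-|xi]; first exact: nth_pos HC xA.
  exact: comp_nth HC hi xi.
- apply/esym/negP => xi; by rewrite (comp_nth_in HC hi xi) in xA.
Qed.

Lemma comps_iff A C : (C \in comps A) = is_comp A C.
Proof.
rewrite mem_undup; apply/mapP/idP => [[f] | HC].
- rewrite mem_enum => Hs ->; exact: blocks_comp.
- exists (fC A C); last by rewrite blocks_fC.
  rewrite mem_enum; exact: fC_surj.
Qed.

Definition okC T C := [forall a, forall b, ((a, b) \in T) ==>
  (pos C a <= pos C b)%N && ((pos C a == pos C b) ==> ((b, a) \in T))].

Lemma predn_le (x y : nat) : (0 < x)%N -> (0 < y)%N -> (x.-1 <= y.-1)%N = (x <= y)%N.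
Proof. by case: x => // x; case: y. Qed.

Lemma predn_eq (x y : nat) : (0 < x)%N -> (0 < y)%N -> (x.-1 == y.-1) = (x == y).
Proof. by case: x => // x; case: y. Qed.

Lemma inL_blocks A T f : T \subset setX A A -> is_surj A f ->
  inL A T f = okC T (blocks A f).
Proof.
move=> HT Hs.
have Hab : forall a b, (a, b) \in T -> (a \in A) && (b \in A).
  by move=> a b /(subsetP HT); rewrite in_setX.
rewrite /inL Hs /=.
apply/andP/forallP => [[/forallP H1 /forallP H2] a | H].
- apply/forallP => b; apply/implyP => abT.
  have /andP[aA bA] := Hab _ _ abT.
  have /andP[ha _] := surj_range Hs aA; have /andP[hb _] := surj_range Hs bA.
  move: (H1 a) (H2 a) => /forallP/(_ b)/implyP/(_ abT) le /forallP/(_ b)/implyP eqi.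
  rewrite !pos_blocks // predn_le // le predn_eq //=.
  by apply/implyP => e; apply: eqi; rewrite abT.
- split; apply/forallP => a; apply/forallP => b.
  + apply/implyP => abT; have /andP[aA bA] := Hab _ _ abT.
    have /andP[ha _] := surj_range Hs aA; have /andP[hb _] := surj_range Hs bA.
    move: (H a) => /forallP/(_ b)/implyP/(_ abT)/andP[le _].
    by rewrite !pos_blocks // predn_le // in le.
  + apply/implyP => /andP[abT e]; have /andP[aA bA] := Hab _ _ abT.
    move: (H a) => /forallP/(_ b)/implyP/(_ abT)/andP[_ /implyP]; apply.
    have /andP[ha _] := surj_range Hs aA; have /andP[hb _] := surj_range Hs bA.
    by rewrite !pos_blocks // predn_eq.
Qed.

Lemma Phi_char A T C : T \subset setX A A ->
  Phi K A T C = (is_comp A C && okC T C)%:R.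
Proof.
move=> HT; rewrite /Phi.
case: (boolP (is_comp A C && okC T C)) => [/andP[HC Hok] | H].
- rewrite (big_pred1 (fC A C)) //= => f /=.
  apply/andP/eqP => [[Hi /eqP Hb] | ->].
  + apply: (@blocks_inj A); [by case/and3P: Hi | exact: fC_surj HC | by rewrite Hb blocks_fC].
  + rewrite blocks_fC // eqxx inL_blocks ?blocks_fC //; exact: fC_surj HC.
- rewrite big_pred0 // => f; apply/negP => /andP[Hi /eqP Hb]; move: H.
  have Hs : is_surj A f by case/and3P: Hi.
  by rewrite -Hb blocks_comp //= -inL_blocks // Hi.
Qed.

Lemma disjE (b1 b2 : {set X}) :
  [disjoint b1 & b2] = [forall x, ~~ ((x \in b1) && (x \in b2))].
Proof.
rewrite -setI_eq0; apply/eqP/forallP => [H x | H].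
- by move/setP: H => /(_ x); rewrite !inE => ->.
- apply/setP => x; rewrite !inE; exact/negbTE/H.
Qed.

Lemma disjF (b1 b2 : {set X}) x : [disjoint b1 & b2] -> x \in b1 -> x \in b2 -> False.
Proof. by rewrite disjE => /forallP/(_ x) H h1 h2; rewrite h1 h2 in H. Qed.

Lemma top_sub A T : is_top A T -> T \subset setX A A.
Proof. by case/and3P. Qed.

Lemma natr_andb (a b : bool) : ((a && b)%:R : K) = a%:R * b%:R.
Proof. by case: a; case: b; rewrite ?mul1r ?mul0r. Qed.

Lemma Phi_out A T C : is_top A T -> ~~ is_comp A C -> Phi K A T C = 0.
Proof. by move=> /top_sub HT HC; rewrite Phi_char // (negbTE HC). Qed.

Lemma comp_set0 C : is_comp set0 C = (C == [::]).
Proof.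
case: C => [|c C]; first by rewrite /is_comp big_nil eqxx.
apply/negP => H; have [c0 _ _ E] := comp_cons H.
by move: E => /esym/eqP; rewrite setU_eq0 (negbTE c0).
Qed.

Lemma Phi_unit C : Phi K set0 set0 C = (C == [::])%:R.
Proof.
rewrite Phi_char ?sub0set // comp_set0.
have -> : okC set0 C by apply/forallP => a; apply/forallP => b; rewrite in_set0.
by rewrite andbT.
Qed.

Lemma block_sub A C b : is_comp A C -> b \in C -> b \subset A.
Proof.
move=> HC bC; apply/subsetP => x xb; rewrite -(comp_cover HC); apply/hasP; by exists b.
Qed.

Lemma comp_cat A B C1 C2 : [disjoint A & B] -> is_comp A C1 -> is_comp B C2 ->
  is_comp (A :|: B) (C1 ++ C2).
Proof.
move=> dAB H1 H2; move: (H1) (H2) => /and3P[a1 b1 /eqP c1] /and3P[a2 b2 /eqP c2].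
apply/and3P; split.
- by rewrite mem_cat negb_or a1 a2.
- rewrite pairwise_cat b1 b2 !andbT; apply/allrelP => u v uC vC.
  rewrite disjE; apply/forallP => x; apply/negP => /andP[xu xv].
  exact: (disjF dAB (subsetP (block_sub H1 uC) x xu) (subsetP (block_sub H2 vC) x xv)).
- by rewrite big_cat c1 c2.
Qed.

Lemma pos_cat A C1 C2 x : is_comp A C1 ->
  pos (C1 ++ C2) x = if x \in A then pos C1 x else (size C1 + pos C2 x)%N.
Proof. by move=> H1; rewrite /pos find_cat (comp_cover H1). Qed.

Lemma in_restr B T a b : ((a, b) \in restr B T) = [&& (a, b) \in T, a \in B & b \in B].
Proof. by rewrite /restr !inE. Qed.

Lemma okC_cat A B T C1 C2 : [disjoint A & B] -> T \subset setX (A :|: B) (A :|: B) ->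
  is_comp A C1 -> is_comp B C2 ->
  okC T (C1 ++ C2) = [&& open_in B T, okC (restr A T) C1 & okC (restr B T) C2].
Proof.
move=> dAB HT H1 H2.
have Hab : forall a b, (a, b) \in T -> (a \in A :|: B) && (b \in A :|: B).
  by move=> a b /(subsetP HT); rewrite in_setX.
have nAB : forall x, x \in B -> x \notin A.
  by move=> x xB; apply/negP => xA; exact: (disjF dAB xA xB).
have pA : forall x, x \in A -> pos (C1 ++ C2) x = pos C1 x.
  by move=> x xA; rewrite (@pos_cat A C1 C2 x H1) xA.
have pB : forall x, x \in B -> pos (C1 ++ C2) x = (size C1 + pos C2 x)%N.
  by move=> x xB; rewrite (@pos_cat A C1 C2 x H1) (negbTE (nAB x xB)).
have ltA : forall x, x \in A -> (pos C1 x < size C1)%N.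
  by move=> x xA; exact: comp_pos_lt H1 xA.
apply/idP/idP.
- move=> H; apply/and3P; split.
  + apply/forallP => a; apply/forallP => b; apply/implyP => /andP[abT aB].
    move: (Hab _ _ abT) => /andP[_]; rewrite in_setU => /orP[bA|//].
    move: H => /forallP/(_ a)/forallP/(_ b)/implyP/(_ abT)/andP[le _].
    rewrite (pB a aB) (pA b bA) in le.
    have := leq_trans (leq_addr (pos C2 a) (size C1)) le.
    by rewrite leqNgt ltA.
  + apply/forallP => a; apply/forallP => b; apply/implyP; rewrite in_restr.
    case/and3P => abT aA bA.
    move: H => /forallP/(_ a)/forallP/(_ b)/implyP/(_ abT).
    by rewrite !pA // in_restr aA bA !andbT.
  + apply/forallP => a; apply/forallP => b; apply/implyP; rewrite in_restr.
    case/and3P => abT aB bB.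
    move: H => /forallP/(_ a)/forallP/(_ b)/implyP/(_ abT).
    by rewrite !pB // leq_add2l eqn_add2l in_restr aB bB !andbT.
- case/and3P => /forallP Hop /forallP HA /forallP HB.
  apply/forallP => a; apply/forallP => b; apply/implyP => abT.
  move: (Hab _ _ abT); rewrite !in_setU => /andP[].
  case: (boolP (a \in A)) => aA /=.
  + case: (boolP (b \in A)) => bA /= => [_ _|_ bB].
    * move: (HA a) => /forallP/(_ b)/implyP; rewrite in_restr abT aA bA => /(_ isT).
      by rewrite !pA // in_restr bA aA !andbT.
    * rewrite pA // pB //.
      have lt := leq_trans (ltA a aA) (leq_addr (pos C2 b) (size C1)).
      by rewrite (ltnW lt) (ltn_eqF lt).
  + move=> aB _.
    have bB : b \in B by move: (Hop a) => /forallP/(_ b)/implyP; apply; rewrite abT aB.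
    move: (HB a) => /forallP/(_ b)/implyP; rewrite in_restr abT aB bB => /(_ isT).
    by rewrite !pB // leq_add2l eqn_add2l in_restr bB aB !andbT.
Qed.

Lemma Phi_coprod A B T C1 C2 : [disjoint A & B] -> is_top (A :|: B) T ->
  is_comp A C1 -> is_comp B C2 ->
  Phi K (A :|: B) T (C1 ++ C2) =
  if open_in B T then Phi K A (restr A T) C1 * Phi K B (restr B T) C2 else 0.
Proof.
move=> dAB /top_sub HT H1 H2.
rewrite !Phi_char ?subsetIr // (comp_cat dAB H1 H2) (okC_cat dAB HT H1 H2) H1 H2 /=.
by case: (open_in B T) => //=; rewrite natr_andb.
Qed.

Lemma bigcup_imset (s : {perm X}) C :
  \bigcup_(B <- [seq s @: B0 | B0 <- C]) B = s @: \bigcup_(B <- C) B.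
Proof.
elim: C => [|c C IH] /=; first by rewrite !big_nil imset0.
by rewrite !big_cons IH imsetU.
Qed.

Lemma pos_relabel (s : {perm X}) C x : pos [seq s @: B | B <- C] (s x) = pos C x.
Proof. rewrite /pos find_map; apply: eq_find => B /=; exact: mem_imset perm_inj. Qed.

Lemma is_comp_relabel (s : {perm X}) A C :
  is_comp (s @: A) [seq s @: B | B <- C] = is_comp A C.
Proof.
have sinj : injective (fun B : {set X} => s @: B) by exact: imset_inj perm_inj.
rewrite /is_comp bigcup_imset (inj_eq sinj) pairwise_map.
have -> : (set0 \in [seq s @: B | B <- C]) = (set0 \in C).
  by rewrite -{1}(imset0 s) (mem_map sinj).
congr [&& _, _ & _]; apply: eq_pairwise => u v /=.
rewrite -!setI_eq0 -imsetI ?imset_eq0 //; move=> x y _ _; exact: perm_inj.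
Qed.

Lemma in_relabel (s : {perm X}) T a b : ((s a, s b) \in relabel s T) = ((a, b) \in T).
Proof.
have finj : injective (fun p : X * X => (s p.1, s p.2)).
  by move=> [a1 b1] [a2 b2] /= [/perm_inj -> /perm_inj ->].
exact: (mem_imset T (a, b) finj).
Qed.

Lemma okC_relabel (s : {perm X}) T C :
  okC (relabel s T) [seq s @: B | B <- C] = okC T C.
Proof.
apply/forallP/forallP => H a.
- apply/forallP => b; move: (H (s a)) => /forallP/(_ (s b)).
  by rewrite !in_relabel !pos_relabel.
- apply/forallP => b; rewrite -[a](permKV s) -[b](permKV s).
  rewrite !in_relabel !pos_relabel; exact: (forallP (H ((s^-1)%g a)) ((s^-1)%g b)).
Qed.

Lemma Phi_relabel (s : {perm X}) A T C : is_top A T ->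
  Phi K (s @: A) (relabel s T) [seq s @: B | B <- C] = Phi K A T C.
Proof.
move=> HT; rewrite !Phi_char ?is_comp_relabel ?okC_relabel //; first exact: top_sub HT.
apply/subsetP => p /imsetP [[a b] qT ->]; move: (subsetP (top_sub HT) _ qT).
move=> /setXP [h1 h2]; apply/setXP; split; exact: imset_f.
Qed.

Definition C0 A : seq {set X} := if A == set0 then [::] else [:: A].

Lemma comp_C0 A : is_comp A (C0 A).
Proof.
rewrite /C0; case: ifP => [/eqP -> | A0]; first by rewrite comp_set0.
by rewrite /is_comp big_cons big_nil setU0 eqxx in_cons in_nil orbF eq_sym A0.
Qed.

Lemma small_comp A C : is_comp A C -> (size C <= 1)%N = (C == C0 A).
Proof.
rewrite /C0; case: C => [|c [|d C]] H.
- by move: H => /and3P[_ _]; rewrite big_nil => /eqP <-; rewrite eqxx.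
- have [c0 _ _ E] := comp_cons H; move: E; rewrite big_nil setU0 => ->.
  by rewrite (negbTE c0) /= eqxx.
- case: ifP => _ //=; by rewrite eqseq_cons andbF.
Qed.

Lemma eps_single A (c : seq {set X} -> K) : eps'_comp A c = c (C0 A).
Proof.
rewrite /eps'_comp (bigD1_seq (C0 A)) ?comps_iff ?comp_C0 ?undup_uniq //.
rewrite (small_comp (comp_C0 A)) eqxx /= mulr1 big1_seq ?addr0 // => C /andP[CC0 Cc].
by rewrite comps_iff in Cc; rewrite (small_comp Cc) (negbTE CC0) mulr0.
Qed.

Lemma Phi_eps A T : is_top A T -> eps'_comp A (Phi K A T) = eps'_top K T.
Proof.
move=> HT; have HT' := top_sub HT.
rewrite eps_single Phi_char // comp_C0 /= /eps'_top.
suff -> : okC T (C0 A) = is_equiv T by [].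
have Hab : forall a b, (a, b) \in T -> (a \in A) && (b \in A).
  by move=> a b /(subsetP HT'); rewrite in_setX.
have pe : forall a b, (a, b) \in T -> pos (C0 A) a = 0%N /\ pos (C0 A) b = 0%N.
  move=> a b /Hab /andP[aA bA]; rewrite /C0.
  have -> : (A == set0) = false by apply/negP => /eqP A0; rewrite A0 in_set0 in aA.
  by rewrite /pos /= aA bA.
rewrite /okC /is_equiv; apply/idP/idP => /forallP H; apply/forallP => a;
  apply/forallP => b; apply/implyP => abT;
  move: (H a) => /forallP/(_ b)/implyP/(_ abT); case: (pe a b abT) => -> ->//.
Qed.

Definition good (psi : {set X} -> {set X * X} -> seq {set X} -> K) :=
  [/\ forall A T C, is_top A T -> ~~ is_comp A C -> psi A T C = 0,
      forall C, psi set0 set0 C = (C == [::])%:R,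
      forall A B T C1 C2, [disjoint A & B] -> is_top (A :|: B) T ->
          is_comp A C1 -> is_comp B C2 ->
          psi (A :|: B) T (C1 ++ C2) =
            if open_in B T then psi A (restr A T) C1 * psi B (restr B T) C2
            else 0
    & eps'_compat psi].

Lemma top_restr A B T : is_top A T -> B \subset A -> is_top B (restr B T).
Proof.
case/and3P => HT /forall_inP Hr /forallP Htr BA; apply/and3P; split.
- exact: subsetIr.
- apply/forall_inP => a aB; by rewrite in_restr aB Hr // (subsetP BA).
- apply/forallP => a; apply/forallP => b; apply/forallP => c.
  rewrite !in_restr; apply/implyP => /andP[/and3P[ab aB bB] /and3P[bc _ cB]].
  rewrite aB cB !andbT.
  by move: (Htr a) => /forallP/(_ b)/forallP/(_ c)/implyP; apply; rewrite ab bc.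
Qed.

Lemma top_set0 T : is_top set0 T -> T = set0.
Proof.
move/top_sub => HT; apply/eqP; rewrite -subset0; apply: subset_trans HT _.
apply/subsetP => -[a b]; by rewrite in_setX in_set0.
Qed.

Lemma good_uniq psi1 psi2 : good psi1 -> good psi2 ->
  forall A T C, is_top A T -> psi1 A T C = psi2 A T C.
Proof.
case=> out1 unit1 cop1 eps1 [out2 unit2 cop2 eps2] A T C.
move: {2}(size C) (erefl (size C)) => n; elim/ltn_ind: n A T C => n IH A T C En HT.
case: (boolP (is_comp A C)) => HC; last by rewrite out1 // out2.
case: C En HC => [|c [|d C']] En HC.
- move: (HC) => /and3P[_ _]; rewrite big_nil => /eqP EA; subst A.
  by rewrite (top_set0 HT) unit1 unit2.
- have [c0 _ _ E] := comp_cons HC; move: E; rewrite big_nil setU0 => EA; subst A.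
  have := eps1 c T HT; have := eps2 c T HT; rewrite !eps_single /C0 (negbTE c0).
  by move=> -> ->.
- have [c0 dj HU EA] := comp_cons HC.
  set U := \bigcup_(B <- d :: C') B in dj HU EA.
  have Hc : is_comp c [:: c] by move: (comp_C0 c); rewrite /C0 (negbTE c0).
  move: HT; rewrite EA => HT.
  rewrite -cat1s cop1 // cop2 //; case: ifP => // _.
  rewrite (IH 1%N _ c (restr c T) [:: c]) ?(IH (size (d :: C')) _ U (restr U T) (d :: C')) //.
  + by rewrite -En.
  + apply: top_restr HT _; exact: subsetUr.
  + by rewrite -En.
  + apply: top_restr HT _; exact: subsetUl.
Qed.

Definition rs A C : seq {set X} := [seq c :&: A | c <- C & c :&: A != set0].

Definition disj (B1 B2 : {set X}) := [disjoint B1 & B2].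

Definition wf A (s : seq {set X}) :=
  all (fun b => (b != set0) && (b \subset A)) s && pairwise disj s.

Lemma qsh_cons (a b : {set X}) s t : qsh (a :: s) (b :: t) =
  [seq a :: u | u <- qsh s (b :: t)] ++ [seq b :: u | u <- qsh (a :: s) t] ++
  [seq (a :|: b) :: u | u <- qsh s t].
Proof. by []. Qed.

Lemma qsh_nilr (s : seq {set X}) : qsh s [::] = [:: s].
Proof. by case: s. Qed.

Lemma rs_cons A (c : {set X}) C :
  rs A (c :: C) = if c :&: A != set0 then (c :&: A) :: rs A C else rs A C.
Proof. by rewrite /rs /=; case: ifP. Qed.

Lemma rs_in A (c : {set X}) C : c \subset A -> c != set0 -> rs A (c :: C) = c :: rs A C.
Proof. by move=> cA c0; rewrite rs_cons (setIidPl cA) c0. Qed.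

Lemma rs_out A (c : {set X}) C : [disjoint c & A] -> rs A (c :: C) = rs A C.
Proof. by move=> dj; rewrite rs_cons (disjoint_setI0 dj) eqxx. Qed.

Lemma rs_all_in A (s : seq {set X}) : all (fun b => (b != set0) && (b \subset A)) s -> rs A s = s.
Proof.
elim: s => [|c s IH] //= /andP[/andP[c0 cA] H]; by rewrite -/(rs A (c :: s)) rs_in // IH.
Qed.

Lemma rs_all_out A B (s : seq {set X}) : [disjoint A & B] -> all (fun b : {set X} => b \subset B) s -> rs A s = [::].
Proof.
move=> dAB; elim: s => [|c s IH] //= /andP[cB H].
rewrite -/(rs A (c :: s)) rs_out ?IH //.
rewrite disjE; apply/forallP => x; apply/negP => /andP[xc xA].
exact: (disjF dAB xA (subsetP cB x xc)).
Qed.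

Lemma wf_weak A A' (s : seq {set X}) : A \subset A' -> wf A s -> wf A' s.
Proof.
move=> AA /andP[H1 H2]; rewrite /wf H2 andbT; apply/allP => b bs.
case/andP: (allP H1 b bs) => -> /= bA; exact: subset_trans bA AA.
Qed.

Lemma wf_cons A (h : {set X}) (u : seq {set X}) : wf A u -> h != set0 -> h \subset A ->
  (forall x, x \in h -> has (fun c : {set X} => x \in c) u -> False) -> wf A (h :: u).
Proof.
move=> /andP[H1 H2] h0 hA Hx; rewrite /wf /= h0 hA H1 H2 /= !andbT.
apply/allP => v vu; rewrite /disj disjE; apply/forallP => x; apply/negP => /andP[xh xv].
apply: (Hx x xh); apply/hasP; by exists v.
Qed.

Lemma has_in_sub A (s : seq {set X}) x : all (fun b => (b != set0) && (b \subset A)) s ->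
  has (fun c : {set X} => x \in c) s -> x \in A.
Proof.
move=> H /hasP [b bs xb]; case/andP: (allP H b bs) => _ bA; exact: (subsetP bA).
Qed.

Lemma wf_head A (a : {set X}) (s : seq {set X}) x : wf A (a :: s) -> x \in a -> has (fun c : {set X} => x \in c) s -> False.
Proof.
case/andP => _; rewrite pairwise_cons => /andP[/allP Ha _] xa /hasP [b bs xb].
exact: (disjF (Ha b bs) xa xb).
Qed.

Lemma wf_all A (s : seq {set X}) : wf A s -> all (fun b => (b != set0) && (b \subset A)) s.
Proof. by case/andP. Qed.

Lemma wf_tail A (a : {set X}) (s : seq {set X}) : wf A (a :: s) -> wf A s.
Proof. by case/andP => /= /andP[_ H1] /= /andP[_ H2]; apply/andP. Qed.

Lemma wf_hd A (a : {set X}) (s : seq {set X}) : wf A (a :: s) -> (a != set0) && (a \subset A).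
Proof. by case/andP => /= /andP[]. Qed.

Lemma disj_sub A B (a : {set X}) : [disjoint A & B] -> a \subset A -> [disjoint a & B].
Proof.
move=> dAB aA; rewrite disjE; apply/forallP => x; apply/negP => /andP[xa xB].
exact: (disjF dAB (subsetP aA x xa) xB).
Qed.

Lemma qsh_props A B s t C : [disjoint A & B] -> wf A s -> wf B t -> C \in qsh s t ->
  [/\ wf (A :|: B) C, rs A C = s, rs B C = t &
      forall x, has (fun c : {set X} => x \in c) C =
                has (fun c : {set X} => x \in c) s || has (fun c : {set X} => x \in c) t].
Proof.
move=> dAB; have dBA : [disjoint B & A] by rewrite disjoint_sym.
elim: s t C => [|a s IHs] t C ws wt.
- rewrite inE => /eqP ->; split.
  + apply: wf_weak wt; exact: subsetUr.
  + apply: rs_all_out dAB _; apply/allP => b bt; by case/andP: (allP (wf_all wt) b bt).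
  + exact: rs_all_in (wf_all wt).
  + by [].
- elim: t C wt => [|b t IHt] C wt.
  + rewrite qsh_nilr inE => /eqP ->; split.
    * apply: wf_weak ws; exact: subsetUl.
    * exact: rs_all_in (wf_all ws).
    * apply: rs_all_out dBA _.
      apply/allP => c cs; by case/andP: (allP (wf_all ws) c cs).
    * by move=> x; rewrite orbF.
  + have /andP[a0 aA] := wf_hd ws; have /andP[b0 bB] := wf_hd wt.
    have ws' := wf_tail ws; have wt' := wf_tail wt.
    have aB := disj_sub dAB aA; have bA := disj_sub dBA bB.
    rewrite qsh_cons !mem_cat => /or3P [] /mapP [u uq ->].
    * have [wu ru1 ru2 hu] := IHs (b :: t) u ws' wt uq.
      split.
      - apply: wf_cons wu a0 _ _; first exact: subset_trans aA (subsetUl A B).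
        move=> x xa; rewrite hu => /orP [hs | ht]; first exact: wf_head ws xa hs.
        exact: disjF aB xa (has_in_sub (wf_all wt) ht).
      - by rewrite rs_in ?ru1 // (subset_trans aA (subsetUl A B)).
      - by rewrite rs_out // ru2.
      - move=> x /=; rewrite hu /=.
        by case: (x \in a); case: (x \in b); case: (has _ s); case: (has _ t).
    * have [wu ru1 ru2 hu] := IHt u wt' uq.
      split.
      - apply: wf_cons wu b0 _ _; first exact: subset_trans bB (subsetUr A B).
        move=> x xb; rewrite hu => /orP [hs | ht]; last exact: wf_head wt xb ht.
        exact: disjF bA xb (has_in_sub (wf_all ws) hs).
      - by rewrite rs_out // ru1.
      - by rewrite rs_in // ru2.
      - move=> x /=; rewrite hu /=.
        by case: (x \in a); case: (x \in b); case: (has _ s); case: (has _ t).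
    * have [wu ru1 ru2 hu] := IHs t u ws' wt' uq.
      have abA : (a :|: b) :&: A = a.
        by rewrite setIUl (setIidPl aA) (disjoint_setI0 bA) setU0.
      have abB : (a :|: b) :&: B = b.
        by rewrite setIUl (setIidPl bB) (disjoint_setI0 aB) set0U.
      split.
      - apply: wf_cons wu _ _ _.
        + by rewrite setU_eq0 negb_and a0.
        + exact: setUSS.
        + move=> x; rewrite in_setU hu => /orP[xa | xb] /orP[hs | ht].
          * exact: wf_head ws xa hs.
          * exact: disjF aB xa (has_in_sub (wf_all wt') ht).
          * exact: disjF bA xb (has_in_sub (wf_all ws') hs).
          * exact: wf_head wt xb ht.
      - by rewrite rs_cons abA a0 ru1.
      - by rewrite rs_cons abB b0 ru2.
      - move=> x /=; rewrite hu in_setU.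
        by case: (x \in a); case: (x \in b); case: (has _ s); case: (has _ t).
Qed.

Lemma heads_disj (h1 h2 : {set X}) (L1 L2 : seq (seq {set X})) : h1 != h2 ->
  ~~ has (mem [seq h1 :: u | u <- L1]) [seq h2 :: u | u <- L2].
Proof.
move=> ne; apply/hasPn => w /mapP [u _ ->]; apply/mapP => [[v _ [E _]]].
by rewrite E eqxx in ne.
Qed.

Lemma sub_disj_ne A B (a b : {set X}) : [disjoint A & B] -> a != set0 -> a \subset A ->
  b \subset B -> a \subset b -> False.
Proof.
move=> dAB a0 aA bB ab; case/set0Pn: a0 => x xa.
exact: (disjF dAB (subsetP aA x xa) (subsetP bB x (subsetP ab x xa))).
Qed.

Lemma qsh_uniq A B s t : [disjoint A & B] -> wf A s -> wf B t -> uniq (qsh s t).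
Proof.
move=> dAB; have dBA : [disjoint B & A] by rewrite disjoint_sym.
elim: s t => [|a s IHs] t ws wt; first by [].
elim: t wt => [|b t IHt] wt; first by rewrite qsh_nilr.
have /andP[a0 aA] := wf_hd ws; have /andP[b0 bB] := wf_hd wt.
have ws' := wf_tail ws; have wt' := wf_tail wt.
have aB := disj_sub dAB aA; have bA := disj_sub dBA bB.
have ne_ab : a != b.
  by apply/negP => /eqP E; apply: (sub_disj_ne dAB a0 aA (_ : b \subset B)) => //; rewrite E.
have ne_aab : a != a :|: b.
  apply/negP => /eqP E; apply: (sub_disj_ne dBA b0 bB aA).
  by rewrite E subsetUr.
have ne_bab : b != a :|: b.
  apply/negP => /eqP E; apply: (sub_disj_ne dAB a0 aA bB).
  by rewrite E subsetUl.
have cinj : forall h : {set X}, injective (fun u : seq {set X} => h :: u).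
  by move=> h u v [].
rewrite qsh_cons !cat_uniq !(map_inj_uniq (cinj _)) has_cat negb_or !heads_disj //.
by rewrite (IHs _ ws' wt) (IHt wt') (IHs _ ws' wt').
Qed.

Lemma qsh_complete A B C :
  all (fun c : {set X} => (c != set0) && (c \subset A :|: B)) C ->
  C \in qsh (rs A C) (rs B C).
Proof.
elim: C => [|c C IH] /=; first by rewrite inE.
case/andP => /andP[c0 cAB] HC; have {}IH := IH HC.
have Ec : c = (c :&: A) :|: (c :&: B) by rewrite -setIUr (setIidPl cAB).
rewrite !rs_cons.
case: (boolP (c :&: A != set0)) => hA; case: (boolP (c :&: B != set0)) => hB.
- rewrite qsh_cons !mem_cat; apply/or3P; apply: Or33; apply/mapP; exists C => //.
  by rewrite -Ec.
- move: hB; rewrite negbK => /eqP cB0.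
  case E: (rs B C) IH => [|b t] IH.
  + move: IH; rewrite !qsh_nilr !inE => /eqP IH; by rewrite -IH {1}Ec cB0 setU0.
  + rewrite qsh_cons !mem_cat; apply/or3P; apply: Or31; apply/mapP; exists C => //.
    by rewrite {1}Ec cB0 setU0.
- move: hA; rewrite negbK => /eqP cA0.
  case E: (rs A C) IH => [|a s] IH.
  + move: IH; rewrite /= !inE => /eqP IH; by rewrite -IH {1}Ec cA0 set0U.
  + rewrite qsh_cons !mem_cat; apply/or3P; apply: Or32; apply/mapP; exists C => //.
    by rewrite {1}Ec cA0 set0U.
- move: hA hB; rewrite !negbK => /eqP hA /eqP hB.
  by rewrite Ec hA hB setU0 eqxx in c0.
Qed.

Lemma comp_wf A C : is_comp A C -> wf A C.
Proof.
move=> HC; move: (HC) => /and3P[H0 Hp _]; rewrite /wf Hp andbT.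
apply/allP => b bC; rewrite (block_sub HC bC) andbT.
by apply: contraNneq H0 => <-.
Qed.

Lemma count_qsh A B C1 C2 C : [disjoint A & B] -> is_comp A C1 -> is_comp B C2 ->
  count_mem C (qsh C1 C2) = [&& is_comp (A :|: B) C, C1 == rs A C & C2 == rs B C].
Proof.
move=> dAB H1 H2; have w1 := comp_wf H1; have w2 := comp_wf H2.
rewrite count_uniq_mem ?(qsh_uniq dAB w1 w2) //; congr (nat_of_bool _).
apply/idP/idP.
- move=> Cq; have [wC r1 r2 hC] := qsh_props dAB w1 w2 Cq.
  rewrite r1 r2 !eqxx !andbT.
  case/andP: wC => wa wp; apply/and3P; split => //.
  + by apply/negP => /(allP wa); rewrite eqxx.
  + apply/eqP/setP => x; by rewrite bigcup_has hC (comp_cover H1) (comp_cover H2) in_setU.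
- case/and3P => HC /eqP -> /eqP ->; apply: qsh_complete; exact: wf_all (comp_wf HC).
Qed.

Lemma rs_comp A B C : is_comp (A :|: B) C -> is_comp A (rs A C).
Proof.
move=> HC; move: (HC) => /and3P[H0 Hp /eqP HU]; apply/and3P; split.
- apply/negP => /mapP [c]; rewrite mem_filter => /andP[cA _] E.
  by rewrite -E eqxx in cA.
- rewrite /rs pairwise_map; apply: pairwise_filter; apply: sub_pairwise Hp => u v /=.
  rewrite !disjE => /forallP H; apply/forallP => x; rewrite !inE; move: (H x).
  by case: (x \in u); case: (x \in v); case: (x \in A).
- apply/eqP/setP => x; rewrite bigcup_has /rs has_map; apply/hasP/idP => [[c _] | xA].
  + by rewrite /= inE => /andP[].
  + have : x \in A :|: B by rewrite in_setU xA.
    rewrite -HU bigcup_has => /hasP [c cC xc]; exists c => /=.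
    * rewrite mem_filter cC andbT; apply/set0Pn; exists x; by rewrite inE xc xA.
    * by rewrite inE xc xA.
Qed.

Lemma find_filter_le (p q P : pred {set X}) (s : seq {set X}) :
  (forall c, p c -> P c) -> (forall c, q c -> P c) ->
  (find p (filter P s) <= find q (filter P s))%N = (find p s <= find q s)%N.
Proof.
move=> hp hq; elim: s => //= c s IH.
case Pc: (P c) => /=.
- by case pc: (p c); case qc: (q c) => //=; rewrite ltnS.
- have -> : p c = false by apply/negP => /hp; rewrite Pc.
  have -> : q c = false by apply/negP => /hq; rewrite Pc.
  by rewrite ltnS.
Qed.

Lemma find_filter_eq (p q P : pred {set X}) (s : seq {set X}) :
  (forall c, p c -> P c) -> (forall c, q c -> P c) ->
  (find p (filter P s) == find q (filter P s)) = (find p s == find q s).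
Proof.
move=> hp hq; elim: s => //= c s IH.
case Pc: (P c) => /=.
- by case pc: (p c); case qc: (q c) => //=; rewrite eqSS.
- have -> : p c = false by apply/negP => /hp; rewrite Pc.
  have -> : q c = false by apply/negP => /hq; rewrite Pc.
  by rewrite eqSS.
Qed.

Lemma pos_rs A C x : x \in A ->
  pos (rs A C) x = find (fun c : {set X} => x \in c) [seq c <- C | c :&: A != set0].
Proof. move=> xA; rewrite /pos /rs find_map; apply: eq_find => c /=; by rewrite inE xA andbT. Qed.

Lemma posle A C a b : a \in A -> b \in A ->
  (pos (rs A C) a <= pos (rs A C) b)%N = (pos C a <= pos C b)%N.
Proof.
move=> aA bA; rewrite !pos_rs // find_filter_le // => c xc;
  apply/set0Pn; by [exists a; rewrite inE xc aA | exists b; rewrite inE xc bA].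
Qed.

Lemma poseq A C a b : a \in A -> b \in A ->
  (pos (rs A C) a == pos (rs A C) b) = (pos C a == pos C b).
Proof.
move=> aA bA; rewrite !pos_rs // find_filter_eq // => c xc;
  apply/set0Pn; by [exists a; rewrite inE xc aA | exists b; rewrite inE xc bA].
Qed.

Lemma okC_union A B T1 T2 C : [disjoint A & B] -> T1 \subset setX A A ->
  T2 \subset setX B B ->
  okC (T1 :|: T2) C = okC T1 (rs A C) && okC T2 (rs B C).
Proof.
move=> dAB H1 H2.
have h1 : forall a b, (a, b) \in T1 -> (a \in A) && (b \in A).
  by move=> a b /(subsetP H1); rewrite in_setX.
have h2 : forall a b, (a, b) \in T2 -> (a \in B) && (b \in B).
  by move=> a b /(subsetP H2); rewrite in_setX.
have n1 : forall a b, (a, b) \in T1 -> ((b, a) \in T1 :|: T2) = ((b, a) \in T1).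
  move=> a b ab; rewrite in_setU; case: (boolP ((b, a) \in T2)) => [/h2 /andP[bB _]|].
  + by case/andP: (h1 _ _ ab) => _ bA; case: (disjF dAB bA bB).
  + by rewrite orbF.
have n2 : forall a b, (a, b) \in T2 -> ((b, a) \in T1 :|: T2) = ((b, a) \in T2).
  move=> a b ab; rewrite in_setU; case: (boolP ((b, a) \in T1)) => [/h1 /andP[bA _]|].
  + by case/andP: (h2 _ _ ab) => _ bB; case: (disjF dAB bA bB).
  + by [].
apply/idP/andP => [H | [G1 G2]].
- split; apply/forallP => a; apply/forallP => b; apply/implyP => ab.
  + have /andP[aA bA] := h1 _ _ ab; rewrite posle // poseq //.
    move: H => /forallP/(_ a)/forallP/(_ b); by rewrite in_setU ab /= n1.
  + have /andP[aB bB] := h2 _ _ ab; rewrite posle // poseq //.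
    move: H => /forallP/(_ a)/forallP/(_ b); by rewrite in_setU ab orbT /= n2.
- apply/forallP => a; apply/forallP => b; rewrite in_setU; apply/implyP => /orP[ab|ab].
  + have /andP[aA bA] := h1 _ _ ab; rewrite n1 //.
    move: G1 => /forallP/(_ a)/forallP/(_ b); by rewrite ab posle // poseq.
  + have /andP[aB bB] := h2 _ _ ab; rewrite n2 //.
    move: G2 => /forallP/(_ a)/forallP/(_ b); by rewrite ab posle // poseq.
Qed.

Lemma Phi_prod A B T1 T2 C : [disjoint A & B] -> is_top A T1 -> is_top B T2 ->
  Phi K (A :|: B) (T1 :|: T2) C = cprod A B (Phi K A T1) (Phi K B T2) C.
Proof.
move=> dAB HT1 HT2; have S1 := top_sub HT1; have S2 := top_sub HT2.
have S12 : T1 :|: T2 \subset setX (A :|: B) (A :|: B).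
  apply/subsetP => -[a b]; rewrite in_setU => /orP[h|h];
    [move: (subsetP S1 _ h) | move: (subsetP S2 _ h)];
    rewrite !in_setX !in_setU => /andP[-> ->]; by rewrite ?orbT.
rewrite /cprod Phi_char //.
case: (boolP (is_comp (A :|: B) C)) => HC /=.
- have rA := rs_comp HC.
  have rB : is_comp B (rs B C) by apply: (@rs_comp B A); rewrite setUC.
  rewrite (bigD1_seq (rs A C)) ?comps_iff ?undup_uniq //=.
  rewrite [X in _ + X]big1_seq ?addr0; last first.
    move=> C1 /andP[ne C1c]; apply: big1_seq => C2 /andP[_ C2c].
    rewrite comps_iff in C1c; rewrite comps_iff in C2c.
    by rewrite (@count_qsh A B C1 C2 C dAB C1c C2c) (negbTE ne) /= andbF mulr0.
  rewrite (bigD1_seq (rs B C)) ?comps_iff ?undup_uniq //= big1_seq ?addr0; last first.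
    move=> C2 /andP[ne C2c]; rewrite comps_iff in C2c.
    by rewrite (@count_qsh A B (rs A C) C2 C dAB rA C2c) (negbTE ne) /= !andbF mulr0.
  rewrite (@count_qsh A B (rs A C) (rs B C) C dAB rA rB) HC !eqxx mulr1 !Phi_char // rA rB /= (okC_union C dAB S1 S2).
  exact: natr_andb.
- rewrite big1_seq // => C1 /andP[_ C1c]; rewrite big1_seq // => C2 /andP[_ C2c].
  rewrite comps_iff in C1c; rewrite comps_iff in C2c.
  by rewrite (@count_qsh A B C1 C2 C dAB C1c C2c) (negbTE HC) mulr0.
Qed.

Lemma good_Phi : good (Phi K).
Proof.
split.
- move=> A T C HT HC; exact: Phi_out.
- exact: Phi_unit.
- move=> A B T C1 C2 dAB HT H1 H2; exact: Phi_coprod.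
- move=> A T HT; exact: Phi_eps.
Qed.

End Proofs.

Theorem theorem41 (X : finType) (K : fieldType) :
  (tb_morphism (@Phi X K) /\ eps'_compat (@Phi X K)) /\
  (forall psi : {set X} -> {set X * X} -> seq {set X} -> K,
     tb_morphism psi -> eps'_compat psi ->
     forall (A : {set X}) (T : {set X * X}), is_top A T -> forall C : seq {set X}, psi A T C = Phi K A T C).
Proof.
split.
- split; last by move=> A T HT; exact: Phi_eps.
  split.
  + move=> A T C HT HC; exact: Phi_out.
  + move=> s A T C HT; exact: Phi_relabel.
  + exact: Phi_unit.
  + move=> A B T1 T2 C dAB H1 H2; exact: Phi_prod.
  + move=> A B T C1 C2 dAB HT H1 H2; exact: Phi_coprod.
- move=> psi [Hout _ Hunit _ Hcop] Heps A T HT C.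
  apply: (good_uniq _ (@good_Phi X K)) => //; by split.
Qed.
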